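(* For all integers $m,n\ge 2$, \[ a(m+n-2)\le \tfrac{1}{6}\,a(m)\,a(n). \] Consequently, for every $n\ge 3$, \[ s\le \left(\frac{a(n)}{6}\right)^{\frac{1}{n-2}}. \]
   Context: Let $\Sigma=\{0,1,2\}$. A word is a finite string of letters from $\Sigma$, and its length is its number of letters. A word $w$ is square-free if it cannot be written as $w=xyyz$ with words $x,y,z$ and $y$ nonempty. $\mathcal{A}(n)$ denotes the set of square-free words of length $n$ over $\Sigma$, and $a(n)=|\mathcal{A}(n)|$. The limit $s=\lim_{n\to\infty}a(n)^{1/n}$ exists; it is the growth rate of ternary square-free words. *)

(* Defs.v *)
From HB Require Import structures.
From mathcomp Require Import all_boot all_order all_algebra.
From mathcomp Require Import all_classical all_reals all_analysis.
Set Implicit Arguments. Unset Strict Implicit. Unset Printing Implicit Defensive.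
Import Order.TTheory GRing.Theory Num.Theory.

Definition Sigma := 'I_3.

Definition squarefree (w : seq Sigma) : Prop :=
  ~ exists x y z : seq Sigma, y <> [::] /\ w = x ++ y ++ y ++ z.

Definition A (n : nat) : {set n.-tuple Sigma} :=
  [set w : n.-tuple Sigma | `[< squarefree (tval w) >]].

Definition a (n : nat) : nat := #|A n|.

(* Main.v *)
Require Import Defs.
From HB Require Import structures.
From mathcomp Require Import all_boot all_order all_algebra.
From mathcomp Require Import all_classical all_reals all_analysis.
From mathcomp Require Import zify ring lra.
Import Order.TTheory GRing.Theory Num.Theory.
Import numFieldNormedType.Exports.

Definition third (a b : 'I_3) : 'I_3 := inord (3 - a - b).
Definition sig (x y x' y' z : 'I_3) : 'I_3 := if z == x then x' else if z == y then y' else third x' y'.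
Lemma sig_can (x y x' y' z : 'I_3) :
  x != y -> x' != y' -> sig x' y' x y (sig x y x' y' z) = z.
Proof.
case: x => [[|[|[|//]]] ?]; case: y => [[|[|[|//]]] ?];
case: x' => [[|[|[|//]]] ?]; case: y' => [[|[|[|//]]] ?];
case: z => [[|[|[|//]]] ?] => // _ _;
rewrite /sig /third -!val_eqE /= ?inordK //=; apply: val_inj; by rewrite /= ?inordK.
Qed.
Lemma cnt : \sum_(p : 'I_3 * 'I_3) nat_of_bool (p.1 != p.2) = 6.
Proof. by rewrite -(pair_bigA _ (fun i j : 'I_3 => nat_of_bool (i != j))) /= !big_ord_recl big_ord0 big_ord0. Qed.

Lemma sqf_catl (u v : seq Sigma) : squarefree (u ++ v) -> squarefree u.
Proof. move=> H [x [y [z [Hy E]]]]; apply: H; exists x, y, (z ++ v); split=> //.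
by rewrite E -!catA. Qed.
Lemma sqf_catr (u v : seq Sigma) : squarefree (u ++ v) -> squarefree v.
Proof. move=> H [x [y [z [Hy E]]]]; apply: H; exists (u ++ x), y, z; split=> //.
by rewrite E -!catA. Qed.
Lemma sqf_take k (w : seq Sigma) : squarefree w -> squarefree (take k w).
Proof. by rewrite -{1}(cat_take_drop k w); apply: sqf_catl. Qed.
Lemma sqf_drop k (w : seq Sigma) : squarefree w -> squarefree (drop k w).
Proof. by rewrite -{1}(cat_take_drop k w); apply: sqf_catr. Qed.
Lemma sqf_map (f g : Sigma -> Sigma) (w : seq Sigma) : cancel f g ->
  squarefree w -> squarefree (map f w).
Proof.
move=> fK H [x [y [z [Hy E]]]]; apply: H; exists (map g x), (map g y), (map g z); split.
  by case: y Hy {E}.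
by rewrite -!map_cat -E mapK.
Qed.
Lemma sqf_adj (w : seq Sigma) i : squarefree w -> i.+1 < size w ->
  nth ord0 w i != nth ord0 w i.+1.
Proof.
move=> H Hi; apply/negP => /eqP E; apply: H.
exists (take i w), [:: nth ord0 w i], (drop i.+2 w); split=> //.
rewrite -{1}(cat_take_drop i w); congr (_ ++ _).
rewrite (drop_nth ord0) ?(ltnW Hi) // (drop_nth ord0) // E //.
Qed.
Lemma inA n (w : n.-tuple Sigma) : (w \in A n) = `[< squarefree w >].
Proof. by rewrite inE. Qed.

Definition F2 (v : seq Sigma) := (nth ord0 v 0, nth ord0 v 1).
Definition S n p := #|[set v in A n | F2 v == p]|.
Definition p01 : Sigma * Sigma := (ord0, Ordinal (isT : 1 < 3)).

Lemma S_le n p q : (2 <= n)%N -> p.1 != p.2 -> q.1 != q.2 -> (S n p <= S n q)%N.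
Proof.
move=> Hn Hp Hq.
pose f := sig p.1 p.2 q.1 q.2; pose g := sig q.1 q.2 p.1 p.2.
have fK : cancel f g by move=> z; apply: sig_can.
pose mt (v : n.-tuple Sigma) : n.-tuple Sigma := [tuple of map f v].
rewrite /S -(card_in_imset (f := mt)); last first.
  by move=> v1 v2 _ _ /(congr1 val) /= /(inj_map (can_inj fK)) /val_inj.
apply: subset_leq_card;  apply/fintype.subsetP => _ /imsetP [v Hv ->].
move: Hv; rewrite !inE => /andP [/asboolP Hs /eqP Hf].
apply/andP; split; first by apply/asboolP; apply: sqf_map fK Hs.
rewrite /F2 /= !(nth_map ord0) ?size_tuple //; last by apply: leq_trans Hn.
subst p; move: Hp; rewrite /f /sig /F2 /= eqxx => Hp; rewrite ifN_eq 1?eq_sym // eqxx; by clear f g fK mt; case: q Hq.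
Qed.

Lemma S_eq n p : (2 <= n)%N -> p.1 != p.2 -> S n p = S n p01.
Proof. by move=> Hn Hp; apply/eqP; rewrite eqn_leq !S_le. Qed.

Lemma a_eq n : (2 <= n)%N -> a n = (6 * S n p01)%N.
Proof.
move=> Hn; rewrite /a -sum1_card (partition_big (fun v : n.-tuple Sigma => F2 v) predT) //=.
rewrite (eq_bigr (fun p => nat_of_bool (p.1 != p.2) * S n p01))%N; last first.
  move=> p _; rewrite sum1_card.
  have -> : #|[pred i | (i \in A n) && (F2 i == p)]| = S n p.
    by apply: eq_card => v; rewrite !inE.
  case: eqP => [Ep|/eqP Hp]; last by rewrite mul1n S_eq.
  rewrite mul0n; apply/eqP; rewrite cards_eq0; apply/eqP/setP => v.
  rewrite !inE; apply/negP => /andP [/asboolP Hs /eqP Hf].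
  have := @sqf_adj _ 0 Hs; rewrite size_tuple => /(_ Hn).
  by move: Hf Ep; rewrite /F2 => <- /= ->; rewrite eqxx.
by rewrite -big_distrl /= cnt.
Qed.

Definition mk k (s : seq Sigma) : k.-tuple Sigma := insubd [tuple of nseq k ord0] s.
Lemma mkK k s : size s = k -> val (mk k s) = s.
Proof. by move=> Hs; rewrite val_insubd Hs eqxx. Qed.

Lemma main_le m n : (2 <= m)%N -> (2 <= n)%N ->
  (a (m + n - 2) <= a m * S n p01)%N.
Proof.
move=> Hm Hn; set K := (m + n - 2)%N.
have HmK : (m <= K)%N by rewrite /K -addnBA // leq_addr.
have HKn : (K - (m - 2) = n)%N.
  rewrite /K; apply/eqP; rewrite -(eqn_add2r (m - 2)) subnK; last first.
    by apply: leq_trans (leq_subr _ _) HmK.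
  by rewrite addnBA // addnC.
pose pre (w : K.-tuple Sigma) := mk m (take m w).
pose suf (w : K.-tuple Sigma) := mk n (drop (m - 2) w).
have preE w : val (pre w) = take m w.
  by rewrite mkK // size_take size_tuple; case: ltngtP HmK.
have sufE w : val (suf w) = drop (m - 2) w.
  by rewrite mkK // size_drop size_tuple.
rewrite /a -sum1_card (partition_big pre (mem (A m))) /=; last first.
  move=> w; rewrite !inA => /asboolP Hs; apply/asboolP; rewrite preE.
  exact: sqf_take.
rewrite -sum_nat_const leq_sum // => u Hu.
rewrite sum1_card.
pose D := [pred w | (w \in A K) && (pre w == u)].
rewrite -(card_in_imset (f := suf) (D := D)); last first.
  move=> w1 w2; rewrite !inE => /andP [_ /eqP E1] /andP [_ /eqP E2] Es.
  have Ht : take m w1 = take m w2 by rewrite -!preE E1 E2.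
  have Hd : drop m w1 = drop m w2.
    by rewrite -(subnKC Hm) -!drop_drop -!sufE Es.
  have := cat_take_drop m w1; rewrite Ht Hd cat_take_drop => Hw.
  by apply: val_inj; rewrite /= Hw.
have Hu2 : F2 (val (mk n [::])) = F2 (val (mk n [::])) by [].
have -> : S n p01 = S n (nth ord0 u (m - 2), nth ord0 u (m - 1)).
  rewrite S_eq //=; move: Hu; rewrite inA => /asboolP Hs.
  have := @sqf_adj _ (m - 2) Hs; rewrite size_tuple.
  have -> : (m - 2).+1 = (m - 1)%N by lia.
  by apply; lia.
rewrite /S; apply: subset_leq_card; apply/fintype.subsetP => _ /imsetP [w Hw ->].
move: Hw; rewrite !inE => /andP [/asboolP Hs /eqP Hp].
apply/andP; split; first by apply/asboolP; rewrite sufE; apply: sqf_drop.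
rewrite /F2 sufE !nth_drop -Hp preE !nth_take; [|lia|lia].
have -> : (m - 2 + 0 = m - 2)%N by lia.
by have -> : (m - 2 + 1 = m - 1)%N by lia.
Qed.
Local Open Scope classical_set_scope.
Local Open Scope ring_scope.

Lemma part1 (R : realType) m n : (2 <= m)%N -> (2 <= n)%N ->
  (a (m + n - 2))%:R <= (a m)%:R * (a n)%:R / 6 :> R.
Proof.
move=> Hm Hn; rewrite (a_eq n Hn) natrM mulrCA mulrAC mulfV ?pnatr_eq0 // mul1r.
by rewrite -natrM ler_nat; exact: main_le.
Qed.

Lemma powK (R : realType) (x : R) d : 0 <= x -> (0 < d)%N -> (x `^ (d%:R)^-1) ^+ d = x.
Proof.
move=> x0 d0; rewrite -powR_mulrn ?powR_ge0 // -powRrM mulVf ?powRr1 //.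
by rewrite pnatr_eq0 -lt0n.
Qed.

Lemma bern (R : realType) (r : R) j : 1 <= r -> 1 + j%:R * (r - 1) <= r ^+ j.
Proof.
move=> r1; elim: j => [|j IH]; first by rewrite mul0r addr0 expr0.
have r0 : 0 <= r by lra.
rewrite exprS; apply: le_trans (ler_wpM2l r0 IH).
have j0 : 0 <= j%:R :> R by [].
have h := mulr_ge0 j0 (sqr_ge0 (r - 1)).
rewrite -natr1; nra.
Qed.

Theorem mainTheorem1 (R : realType) :
  (forall m n : nat, (2 <= m)%N -> (2 <= n)%N ->
     (a (m + n - 2))%:R <= (a m)%:R * (a n)%:R / 6 :> R)
  /\
  (forall s : R,
     (fun k : nat => (a k)%:R `^ (k%:R)^-1 : R) @ \oo --> s ->
     forall n : nat, (3 <= n)%N ->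
       s <= ((a n)%:R / 6) `^ ((n - 2)%:R)^-1).
Proof.
split; first by move=> m n; apply: part1.
move=> s H n Hn.
set d := (n - 2)%N; set x : R := (a n)%:R / 6.
have d0 : (0 < d)%N by rewrite /d; lia.
have nd : n = (d + 2)%N by rewrite /d; lia.
clearbody d.
have x0 : 0 <= x by rewrite /x divr_ge0.
have an : (a n)%:R = x * 6 :> R by rewrite /x divfK ?pnatr_eq0.
have Hq : forall q, (a (q.+1 * d + 2))%:R <= 6 * x ^+ q.+1 :> R.
  elim => [|q IH].
    have -> : (1 * d + 2 = n)%N by lia.
    by rewrite expr1 an mulrC.
  have -> : (q.+2 * d + 2 = (q.+1 * d + 2) + n - 2)%N by rewrite mulSn; lia.
  apply: le_trans; first (apply: (part1 R (q.+1 * d + 2) n); lia).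
  rewrite an mulrA mulfK ?pnatr_eq0 // exprSr mulrA.
  first [exact: (ler_wpM2r x0 IH) | by apply: ler_wpM2r | by apply: (@ler_wpM2r _ x x0 _ _ IH) | (clearbody x; exact: ler_wpM2r x0 IH)].
set c := x `^ (d%:R)^-1.
have c0 : 0 <= c by apply: powR_ge0.
have cx : c ^+ d = x by apply: powK.
rewrite leNgt; apply/negP => Hcs.
set t := (c + s) / 2.
have ct : c < t by rewrite /t; lra.
have ts : t < s by rewrite /t; lra.
have t0 : 0 < t by lra.
have := cvgr_gt s H t ts; case=> N _ HN.
have key : forall k, (N <= k)%N -> (0 < k)%N -> t ^+ k < (a k)%:R :> R.
  move=> k Nk k0; have /= Hu := HN k Nk.
  rewrite -[X in _ < X](@powK R (a k)%:R k) //.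
  by rewrite ltrXn2r ?(ltW t0) // -lt0n.
set y := t ^+ d.
have xy : x < y by rewrite -cx /y ltrXn2r // -lt0n.
have y0 : 0 < y by rewrite /y exprn_gt0.
have ineq : forall q, (N <= q)%N -> y ^+ q.+1 * t ^+ 2 < 6 * x ^+ q.+1.
  move=> q Nq; apply: lt_le_trans (Hq q).
  have -> : y ^+ q.+1 * t ^+ 2 = t ^+ (q.+1 * d + 2).
    by rewrite exprD /y -exprM mulnC.
  apply: key; last lia.
  have h : (q.+1 <= q.+1 * d)%N by rewrite leq_pmulr. 
  lia.
have [x00|xpos] := eqVneq x 0.
  have := ineq N (leqnn N); rewrite x00 expr0n /= mulr0.
  by rewrite ltNge => /negP; apply; rewrite mulr_ge0 // exprn_ge0 // ltW.
have xp : 0 < x by rewrite lt_def xpos x0.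
set r := y / x.
have r1 : 1 <= r by rewrite /r ler_pdivlMr // mul1r ltW.
have r1' : 0 < r - 1 by rewrite subr_gt0 /r ltr_pdivlMr // mul1r.
set M := Num.truncn (6 / ((r - 1) * t ^+ 2)).
have HM := truncnS_gt (6 / ((r - 1) * t ^+ 2)).
have := ineq (N + M)%N (leq_addr _ _).
have -> : y = r * x by rewrite /r divfK.
rewrite exprMn -mulrA [_ * t ^+ 2]mulrC mulrA ltr_pM2r ?exprn_gt0 //.
apply/negP; rewrite -leNgt.
have t2 : 0 < t ^+ 2 by rewrite exprn_gt0.
have hb := ler_wpM2r (ltW t2) (bern R r (N + M).+1 r1).
apply: (le_trans _ hb).
have HM' : (M.+1)%:R <= (N + M).+1%:R :> R by rewrite ler_nat ltnS leq_addl.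
have hp : 0 < (r - 1) * t ^+ 2 by rewrite mulr_gt0.
move: HM; rewrite ltr_pdivrMr // => HM.
have h6 : 6 <= (N + M).+1%:R * ((r - 1) * t ^+ 2).
  apply: (le_trans (ltW HM)); by rewrite ler_pM2r.
rewrite mulrDl mul1r -mulrA.
apply: (le_trans h6); rewrite lerDr; exact: ltW.
Qed.
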